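(* Let $\mathbf d=(d_1,\dots,d_m)$, $D=\max_id_i$, and let $\mathcal P_{n,\mathbf d}=\bigoplus_{i=1}^m\mathbb{C}[x_1,\dots,x_n]_{\le d_i}$. Let $\mathrm{GL}_m(\mathbb{C})\times\mathrm{GL}_n(\mathbb{C})$ act on $\mathcal P_{n,\mathbf d}\otimes\mathbb{C}^{n\times m}$ by $(X,Y)\cdot(\mathbf f\otimes A)=((X,Y)\cdot\mathbf f)\otimes YAX^{-1}$, and restrict to a symmetric subgroup $G$ containing $T_m(\mathbb{C})\times T_n(\mathbb{C})$. Then every weight of this representation has the form $(e_i-e_j,\,-\alpha+e_l)\in\mathbb{Z}^{m+n}$ with $1\le i,j\le m$, $1\le l\le n$, $\alpha\in\mathbb{N}^n$, $|\alpha|\le D$; and the weight norm $N$ and weight margin $\gamma$ satisfy $N\le D+2$ and $\gamma\ge (D+2)^{1-m-n}(m+n)^{-1}$.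
   Context: $\mathbb{C}[x_1,\dots,x_n]_{\le d}$: polynomials of degree at most $d$. Actions on systems: $(X\cdot\mathbf f)_i=\sum_jX_{ij}f_j$, $Y\cdot\mathbf f=(f_1\circ Y^{-1},\dots,f_m\circ Y^{-1})$, $(X,Y)\cdot\mathbf f=X\cdot(Y\cdot\mathbf f)$. $T_k(\mathbb{C})$: invertible diagonal $k\times k$ matrices; symmetric subgroup: Zariski closed and closed under conjugate transposition. A weight is $\omega=(\omega',\omega'')\in\mathbb{Z}^m\times\mathbb{Z}^n$ such that some nonzero vector $u$ satisfies $(\mathrm{diag}(t),\mathrm{diag}(s))\cdot u=t^{\omega'}s^{\omega''}u$ for all diagonal invertible matrices, in a weight basis. Weight norm $N=\max_{\omega}\|\omega\|_2$; weight margin $\gamma=\min\{\mathrm{dist}(0,\mathrm{conv}(S)):S\subseteq\Omega,\ 0\notin\mathrm{conv}(S)\}$ over subsets $S$ of the weight set $\Omega$. *)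

(* Defs.v *)
From HB Require Import structures.
From mathcomp Require Import all_boot all_order all_algebra.
From mathcomp Require Import mpoly.
From mathcomp Require Import complex.
From mathcomp Require Import Rstruct.

Set Implicit Arguments.
Unset Strict Implicit.
Unset Printing Implicit Defensive.

Import Order.TTheory GRing.Theory Num.Theory.
Local Open Scope ring_scope.

Definition RR : rcfType := Rdefinitions.R.
Definition CC : numClosedFieldType := (RR[i])%C.

(* C[x_1,...,x_n]_{<= d} : polynomials of total degree at most d
   (msize p = 1 + deg p, and msize 0 = 0). *)
Definition poly_le (n d : nat) (p : {mpoly CC[n]}) : bool := (msize p <= d.+1)%N.

Definition lin_subst (n : nat) (M : 'M[CC]_n) : n.-tuple {mpoly CC[n]} :=
  [tuple \sum_(q < n) M k q *: 'X_q | k < n].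

Definition poly_compinv (n : nat) (Y : 'M[CC]_n) (f : {mpoly CC[n]}) : {mpoly CC[n]} :=
  f \mPo lin_subst (invmx Y).

Definition system (m n : nat) := 'I_m -> {mpoly CC[n]}.

Definition actX (m n : nat) (X : 'M[CC]_m) (f : system m n) : system m n :=
  fun i => \sum_(j < m) X i j *: f j.

Definition actY (m n : nat) (Y : 'M[CC]_n) (f : system m n) : system m n :=
  fun i => poly_compinv Y (f i).

Definition act_sys (m n : nat) (X : 'M[CC]_m) (Y : 'M[CC]_n) (f : system m n)
  : system m n := actX X (actY Y f).

(* An element u = sum_{l,j} u_{l,j} (x) E_{l j}  (E_{l j} the elementary
   n x m matrices) is encoded by its components u l j : system m n,
   with u l j i in C[x]_{<= d_i}.                                        *)
Definition tens (m n : nat) := 'I_n -> 'I_m -> system m n.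

Definition in_rep (m n : nat) (d : 'I_m -> nat) (u : tens m n) : Prop :=
  forall l j i, poly_le (d i) (u l j i).

Definition tens_nonzero (m n : nat) (u : tens m n) : Prop :=
  exists l j i, u l j i != 0.

(* (X,Y) . (f (x) A) = ((X,Y) . f) (x) Y A X^{-1}, extended linearly:
   the (l',j') component of (X,Y).u is
   sum_{l,j} (Y A X^{-1} with A = E_{l j})_{l' j'} * (X,Y).(u_{l,j})
   = sum_{l,j} Y_{l' l} (X^{-1})_{j j'} (X,Y).(u_{l,j}).                 *)
Definition act_tens (m n : nat) (X : 'M[CC]_m) (Y : 'M[CC]_n) (u : tens m n)
  : tens m n :=
  fun l' j' i => \sum_(l < n) \sum_(j < m)
                   (Y l' l * invmx X j j') *: act_sys X Y (u l j) i.

Definition tens_scale (m n : nat) (c : CC) (u : tens m n) : tens m n :=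
  fun l j i => c *: u l j i.

Definition nz_vec (k : nat) (t : 'rV[CC]_k) : Prop := forall a, t 0 a != 0.

Definition lmono (k : nat) (t : 'rV[CC]_k) (w : 'I_k -> int) : CC :=
  \prod_(a < k) (t 0 a) ^ (w a).

Definition is_weight (m n : nat) (d : 'I_m -> nat)
  (w' : 'I_m -> int) (w'' : 'I_n -> int) : Prop :=
  exists u : tens m n, in_rep d u /\ tens_nonzero u /\
    forall (t : 'rV[CC]_m) (s : 'rV[CC]_n), nz_vec t -> nz_vec s ->
      act_tens (diag_mx t) (diag_mx s) u
      = tens_scale (lmono t w' * lmono s w'') u.

Definition pair_coords (m n : nat) (X : 'M[CC]_m) (Y : 'M[CC]_n)
  : 'I_(m * m + n * n) -> CC :=
  fun k => row_mx (mxvec X) (mxvec Y) 0 k.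

Definition conjT (k : nat) (M : 'M[CC]_k) : 'M[CC]_k := (map_mx Num.conj M)^T.

Definition symmetric_subgroup (m n : nat) (G : 'M[CC]_m -> 'M[CC]_n -> Prop) : Prop :=
  (forall X Y, G X Y -> X \in unitmx /\ Y \in unitmx) /\
  G 1%:M 1%:M /\
  (forall X Y X' Y', G X Y -> G X' Y' -> G (X *m X') (Y *m Y')) /\
  (forall X Y, G X Y -> G (invmx X) (invmx Y)) /\
  (* Zariski closed in GL_m x GL_n *)
  (exists P : {mpoly CC[m * m + n * n]} -> Prop,
     forall X Y, G X Y <->
       [/\ X \in unitmx, Y \in unitmx &
           forall p, P p -> p.@[pair_coords X Y] = 0]) /\
  (forall X Y, G X Y -> G (conjT X) (conjT Y)).

Definition contains_torus (m n : nat) (G : 'M[CC]_m -> 'M[CC]_n -> Prop) : Prop :=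
  forall (t : 'rV[CC]_m) (s : 'rV[CC]_n), nz_vec t -> nz_vec s ->
    G (diag_mx t) (diag_mx s).

Definition wnorm (m n : nat) (a : 'I_m -> RR) (b : 'I_n -> RR) : RR :=
  Num.sqrt (\sum_(i < m) a i ^+ 2 + \sum_(l < n) b l ^+ 2).

Definition in_conv (m n : nat) (S : ('I_m -> int) -> ('I_n -> int) -> Prop)
  (p' : 'I_m -> RR) (p'' : 'I_n -> RR) : Prop :=
  exists (k : nat) (v' : 'I_k -> 'I_m -> int) (v'' : 'I_k -> 'I_n -> int)
         (lam : 'I_k -> RR),
    (forall r, S (v' r) (v'' r)) /\ (forall r, 0 <= lam r) /\
    \sum_(r < k) lam r = 1 /\
    (forall i, p' i = \sum_(r < k) lam r * (v' r i)%:~R) /\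
    (forall l, p'' l = \sum_(r < k) lam r * (v'' r l)%:~R).

Definition weight_norm_le (m n : nat) (Om : ('I_m -> int) -> ('I_n -> int) -> Prop)
  (c : RR) : Prop :=
  forall w' w'', Om w' w'' -> wnorm (fun i => (w' i)%:~R) (fun l => (w'' l)%:~R) <= c.

(* c <= gamma, where gamma = min over subsets S of Om with 0 notin conv(S) of
   dist(0, conv S) = inf_{p in conv S} ||p||_2. *)
Definition weight_margin_ge (m n : nat) (Om : ('I_m -> int) -> ('I_n -> int) -> Prop)
  (c : RR) : Prop :=
  forall S : ('I_m -> int) -> ('I_n -> int) -> Prop,
    (forall w' w'', S w' w'' -> Om w' w'') ->
    ~ in_conv S (fun _ => 0) (fun _ => 0) ->
    forall p' p'', in_conv S p' p'' -> c <= wnorm p' p''.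

Definition evec (k : nat) (i : 'I_k) : 'I_k -> int := fun a => (a == i)%:R.

(* Main.v *)
Require Import Defs.
From HB Require Import structures.
From mathcomp Require Import all_boot all_order all_algebra.
From mathcomp Require Import mpoly complex Rstruct.
From mathcomp Require Import zify ring lra.
Set Implicit Arguments. Unset Strict Implicit. Unset Printing Implicit Defensive.
Import Order.TTheory GRing.Theory Num.Theory.
Local Open Scope ring_scope.

Section Had.
Variable R : realFieldType.

Lemma rv_sq (k : nat) (x : 'rV[R]_k) : (x *m x^T) 0 0 = \sum_j x 0 j ^+ 2.
Proof. by rewrite mxE; apply: eq_bigr => j _; rewrite mxE expr2. Qed.

Lemma rv_sq0 (k : nat) (x : 'rV[R]_k) : x *m x^T = 0 -> x = 0.
Proof.
move=> /matrixP /(_ 0 0); rewrite rv_sq mxE => /eqP.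
rewrite psumr_eq0 => [/allP H|j _]; last exact: sqr_ge0.
apply/rowP => j; rewrite mxE; apply/eqP; rewrite -sqrf_eq0.
exact: (implyP (H j (mem_index_enum _))).
Qed.

Lemma sq_orth k (q x : 'rV[R]_k) : q *m x^T = 0 ->
  ((q + x) *m (q + x)^T) 0 0 = (q *m q^T) 0 0 + (x *m x^T) 0 0.
Proof.
move=> h; have h2 : x *m q^T = 0 by rewrite -(trmxK x) -trmx_mul h trmx0.
by rewrite linearD /= mulmxDl !mulmxDr h h2 addr0 add0r [LHS]mxE.
Qed.

Lemma hadamard_gram (r k : nat) (A : 'M[R]_(r, k)) :
  0 <= \det (A *m A^T) <= \prod_(i < r) \sum_(j < k) A i j ^+ 2.
Proof.
elim: r A => [|r IH] A.
  by rewrite det_mx00 big_ord0 lexx ler01.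
pose b : 'rV_k := usubmx (A : 'M_(1 + r, k)).
pose A' : 'M_(r, k) := dsubmx (A : 'M_(1 + r, k)).
have eA : A = col_mx b A' by rewrite vsubmxK.
have hprod : \prod_(i < r.+1) \sum_(j < k) A i j ^+ 2 =
   (\sum_j b 0 j ^+ 2) * \prod_(i < r) \sum_(j < k) A' i j ^+ 2.
  rewrite big_ord_recl; congr (_ * _).
    by apply: eq_bigr => j _; rewrite /b mxE; congr (A _ _ ^+ 2); apply: val_inj.
  apply: eq_bigr => i _; apply: eq_bigr => j _; rewrite /A' mxE.
  by congr (A _ _ ^+ 2); apply: val_inj.
have hb0 : 0 <= \sum_j b 0 j ^+ 2 by apply: sumr_ge0 => j _; exact: sqr_ge0.
have [IH1 IH2] := andP (IH A').
have [hu|hnu] := boolP (A' *m A'^T \in unitmx); last first.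
  have : \det (A' *m A'^T) == 0 by move: hnu; rewrite unitmxE unitfE negbK.
  move=> /det0P [v v0 hv].
  have hvA : v *m A' = 0.
    by apply: rv_sq0; rewrite trmx_mul mulmxA -(mulmxA v) hv mul0mx.
  have : \det (A *m A^T) == 0.
    apply/det0P; exists (row_mx 0 v : 'rV_(1 + r)).
      apply: contra v0 => /eqP h; apply/eqP; have := congr1 (@rsubmx _ 1 1 r) h; rewrite row_mxKr => ->; apply/matrixP => i j; by rewrite !mxE.
    have e1 : (row_mx 0 v : 'rV_(1 + r)) *m A = 0 by rewrite eA mul_row_col mul0mx add0r hvA.
    by rewrite (mulmxA (row_mx 0 v : 'rV_(1 + r))) e1 mul0mx.
  move=> /eqP ->; rewrite lexx /= hprod; apply: mulr_ge0 => //.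
  exact: le_trans IH2.
pose c := b *m A'^T *m invmx (A' *m A'^T).
pose q := b - c *m A'.
have hq : q *m A'^T = 0.
  by rewrite /q mulmxBl -!mulmxA mulVmx // mulmx1 subrr.
have hqT : A' *m q^T = 0 by rewrite -(trmxK A') -trmx_mul hq trmx0.
have eb : b = q + c *m A' by rewrite /q subrK.
clearbody q c.
have eA2 : A = block_mx 1%:M c 0 (1%:M) *m col_mx q A'.
  by rewrite mul_block_col !mul1mx mul0mx add0r -eb.
have hdet : \det (A *m A^T) = (\sum_j q 0 j ^+ 2) * \det (A' *m A'^T).
  rewrite eA2 trmx_mul -!mulmxA det_mulmx (mulmxA (col_mx q A')) det_mulmx.
  have dE : \det (block_mx 1%:M c 0 1%:M : 'M_(1 + r)) = 1 by rewrite det_ublock !det1 mulr1.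
  have dQ : \det (col_mx q A' *m (col_mx q A')^T : 'M_(1 + r)) = (\sum_j q 0 j ^+ 2) * \det (A' *m A'^T).
    by rewrite tr_col_mx mul_col_row hq hqT det_ublock det_mx11 rv_sq.
  by rewrite det_tr dE dQ mul1r mulr1.
have hqb : \sum_j q 0 j ^+ 2 <= \sum_j b 0 j ^+ 2.
  have hx : q *m (c *m A')^T = 0 by rewrite trmx_mul mulmxA hq mul0mx.
  rewrite -!rv_sq eb sq_orth // lerDl rv_sq; apply: sumr_ge0 => j _; exact: sqr_ge0.
have hq0 : 0 <= \sum_j q 0 j ^+ 2 by apply: sumr_ge0 => j _; exact: sqr_ge0.
rewrite hdet hprod mulr_ge0 //=.
by apply: ler_pM.
Qed.

Lemma hadamard (r : nat) (A : 'M[R]_r) :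
  \det A ^+ 2 <= \prod_(i < r) \sum_(j < r) A i j ^+ 2.
Proof.
have := hadamard_gram A; rewrite det_mulmx det_tr -expr2 => /andP [_ ->] //.
Qed.
End Had.

Section Final.
Variable R : rcfType.

Lemma sum_inj_le (K k : nat) (g : 'I_K -> 'I_k) (F : 'I_k -> R) :
  injective g -> (forall a, 0 <= F a) -> \sum_(c < K) F (g c) <= \sum_(a < k) F a.
Proof.
move=> gi F0.
rewrite -(big_imset (fun a => F a) (A := predT)); last by move=> x y _ _; exact: gi.
rewrite [X in _ <= X](bigID (fun a => a \in [set g x | x in predT])) /= lerDl.
exact: sumr_ge0.
Qed.

Lemma abs_le_norm (k : nat) (p : 'rV[R]_k) (a : 'I_k) :
  `|p 0 a| <= Num.sqrt (\sum_b p 0 b ^+ 2).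
Proof.
rewrite -sqrtr_sqr ler_sqrt; last by apply: sumr_ge0 => b _; exact: sqr_ge0.
rewrite (bigD1 a) //= lerDl; apply: sumr_ge0 => b _; exact: sqr_ge0.
Qed.

Lemma final_case (k K : nat) (Mi : 'M[int]_(K, k)) (h : 'cV[R]_k) (N : R)
    (lam : 'rV[R]_K) :
  1 <= N -> h != 0 -> map_mx intr Mi *m h = 0 ->
  row_free (map_mx intr Mi : 'M[R]_(K, k)) ->
  (forall r, \sum_a ((Mi r a)%:~R : R) ^+ 2 + 1 <= N ^+ 2) ->
  \sum_r lam 0 r = 1 ->
  1 <= k%:R * N ^+ k.-1 * Num.sqrt (\sum_a (lam *m map_mx intr Mi) 0 a ^+ 2).
Proof.
set M := map_mx intr Mi => N1 h0 Mh rf Mb lam1.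
set p := lam *m M.
set S := Num.sqrt _.
have S0 : 0 <= S by exact: sqrtr_ge0.
have N0 : 0 <= N by apply: le_trans N1.
have hK : (K < k)%N.
  have := mulmx0_rank_max Mh; rewrite (eqP rf).
  have : (0 < \rank h)%N by rewrite lt0n mxrank_eq0.
  move=> h1 h2; lia.
have fMT : row_full M^T by rewrite /row_full mxrank_tr.
pose g := fullrankfun fMT.
have gi : injective g := @fullrankfun_inj _ _ _ M^T fMT.
pose MJ := (rowsub g M^T)^T.
have MJu : MJ \in unitmx by rewrite unitmx_tr fullrowsub_unit.
have MJE : forall r a, MJ r a = M r (g a) by move=> r a; rewrite !mxE.
pose MJi := \matrix_(r, a) Mi r (g a).
have MJm : MJ = map_mx intr MJi by apply/matrixP => r a; rewrite MJE !mxE.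
have detge1 : 1 <= `|\det MJ|.
  have : \det MJ != 0 by rewrite -unitfE -unitmxE.
  rewrite MJm det_map_mx -intr_norm ler1z -gtz0_ge1 normr_gt0.
  by apply: contra => /eqP ->; rewrite rmorph0.
pose y := invmx MJ *m const_mx 1 : 'cV_K.
have key : 1 = \sum_a p 0 (g a) * y a 0.
  have e1 : (lam *m MJ *m y) = lam *m const_mx 1.
    by rewrite /y !mulmxA -(mulmxA lam) mulmxV // mulmx1.
  have e2 := congr1 (fun X : 'M[R]_1 => X 0 0) e1; simpl in e2.
  have e3 : (lam *m const_mx 1 : 'M[R]_1) 0 0 = 1.
    by rewrite mxE -[RHS]lam1; apply: eq_bigr => r _; rewrite mxE mulr1.
  rewrite -e3 -e2 mxE; apply: eq_bigr => a _; congr (_ * _).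
  by rewrite !mxE; apply: eq_bigr => r _; rewrite MJE.
have ybound : forall a, `|y a 0| <= N ^+ K.
  move=> a.
  pose Ba := \matrix_(b, c) if c == a then 1 else MJ b c.
  have ya : y a 0 = (\det MJ)^-1 * \det Ba.
    rewrite /y /invmx MJu mxE (expand_det_col Ba a) mulr_sumr.
    apply: eq_bigr => b _; rewrite !mxE eqxx mul1r mulr1.
    congr (_ * _); rewrite /cofactor; congr (_ * _); congr (\det _).
    by apply/matrixP => i j; rewrite !mxE eq_sym (negPf (neq_lift _ _)).
  rewrite ya normrM normfV.
  have hB : `|\det Ba| <= N ^+ K.
    rewrite -(ler_sqr (normr_ge0 _)); last by rewrite nnegrE exprn_ge0.
    rewrite real_normK ?num_real // -exprM mulnC exprM.
    apply: le_trans (hadamard Ba) _.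
    have -> : N ^+ 2 ^+ K = \prod_(b < K) N ^+ 2 by rewrite prodr_const card_ord.
    apply: ler_prod => b _.
    rewrite sumr_ge0 /=; last by move=> c _; exact: sqr_ge0.
    apply: le_trans (Mb b).
    apply: (@le_trans _ _ (\sum_c (MJ b c ^+ 2 + (c == a)%:R))).
      apply: ler_sum => c _; rewrite mxE; case: eqP => _.
        by rewrite expr1n lerDr sqr_ge0.
      by rewrite addr0.
    rewrite big_split /=.
    have -> : \sum_(i < K) (i == a)%:R = 1 :> R by rewrite (bigD1 a) //= eqxx big1 ?addr0 // => i /negPf ->.
    rewrite lerD2r.
    under eq_bigr do rewrite MJE.
    apply: le_trans (sum_inj_le (F := fun a' => M b a' ^+ 2) gi _) _.
      by move=> a'; exact: sqr_ge0.
    by rewrite le_eqVlt; apply/orP; left; apply/eqP; apply: eq_bigr => c _; rewrite mxE.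
  apply: le_trans hB.
  rewrite ler_pdivrMl ?(lt_le_trans ltr01) //.
  by rewrite ler_peMl // normr_ge0.
rewrite {1}key; apply: le_trans (ler_norm _) _; apply: le_trans (ler_norm_sum _ _ _) _.
apply: (@le_trans _ _ (\sum_(a < K) S * N ^+ K)).
  apply: ler_sum => a _; rewrite normrM; apply: ler_pM => //.
  exact: abs_le_norm.
rewrite sumr_const card_ord -[_ *+ K]mulr_natl [S * _]mulrC mulrA.
apply: ler_wpM2r => //; apply: ler_pM => //; first exact: exprn_ge0.
  by rewrite ler_nat; lia.
by apply: ler_weXn2l => //; lia.
Qed.

End Final.

Section Red.
Variable R : rcfType.

Lemma pivot (K : nat) (lam w : 'rV[R]_K) :
  (forall r, 0 <= lam 0 r) -> (exists r, 0 < w 0 r) ->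
  exists r0 t, [/\ 0 <= t, (forall r, 0 <= lam 0 r - t * w 0 r) & lam 0 r0 - t * w 0 r0 = 0].
Proof.
move=> l0 [r1 w1].
case: (@arg_minP _ R _ r1 (fun r => 0 < w 0 r) (fun r => lam 0 r / w 0 r) w1) => r0 w0 hmin.
exists r0, (lam 0 r0 / w 0 r0); split.
- by apply: divr_ge0 => //; exact: ltW.
- move=> r; rewrite subr_ge0; case: (ltrP 0 (w 0 r)) => wr.
    by rewrite -ler_pdivlMr // hmin.
  apply: le_trans (l0 r); rewrite mulr_ge0_le0 //; apply: divr_ge0 => //; exact: ltW.
- by rewrite divfK ?subrr // gt_eqF.
Qed.

Lemma mul_lift (K k : nat) (r0 : 'I_K.+1) (u : 'rV[R]_K.+1) (A : 'M[R]_(K.+1, k)) :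
  u 0 r0 = 0 -> u *m A = (\row_i u 0 (lift r0 i)) *m rowsub (lift r0) A.
Proof.
move=> u0; rewrite !mulmx_sum_row (bigD1_ord r0) //= u0 scale0r add0r.
apply: eq_bigr => i _; rewrite mxE; congr (_ *: _).
by apply/rowP => j; rewrite !mxE.
Qed.

Lemma sum_lift (K : nat) (r0 : 'I_K.+1) (u : 'I_K.+1 -> R) :
  u r0 = 0 -> \sum_r u r = \sum_i u (lift r0 i).
Proof. by move=> u0; rewrite (bigD1_ord r0) //= u0 add0r. Qed.

Lemma nonneg_contra (K k : nat) (M : 'M[R]_(K, k)) (u : 'rV[R]_K) :
  (forall mu : 'rV[R]_K, (forall r, 0 <= mu 0 r) -> \sum_r mu 0 r = 1 -> mu *m M != 0) ->
  (forall r, 0 <= u 0 r) -> u != 0 -> u *m M = 0 -> False.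
Proof.
move=> nz u0 un uM.
have s0 : \sum_r u 0 r != 0.
  apply: contra un; rewrite psumr_eq0 // => /allP H; apply/eqP/rowP => r.
  by rewrite mxE; apply/eqP; exact: (implyP (H r (mem_index_enum _))).
have h1 : forall r, 0 <= ((\sum_r u 0 r)^-1 *: u) 0 r.
  by move=> r; rewrite mxE mulr_ge0 // invr_ge0 sumr_ge0.
have h2 : \sum_r ((\sum_r u 0 r)^-1 *: u) 0 r = 1.
  by under eq_bigr do rewrite mxE; rewrite -mulr_sumr mulVf.
by move: (nz _ h1 h2); rewrite -scalemxAl uM scaler0 eqxx.
Qed.

Lemma find_w (K k : nat) (M : 'M[R]_(K, k)) (nu : 'rV[R]_K) :
  (forall mu : 'rV[R]_K, (forall r, 0 <= mu 0 r) -> \sum_r mu 0 r = 1 -> mu *m M != 0) ->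
  nu != 0 -> nu *m M = 0 ->
  exists w : 'rV[R]_K, [/\ w *m M = 0, \sum_r w 0 r <= 0 & exists r, 0 < w 0 r].
Proof.
move=> nz n0 nM.
case: (lerP (\sum_r nu 0 r) 0) => hs.
  case: (boolP [exists r, 0 < nu 0 r]) => [/existsP [r hr]|/existsPn H].
    by exists nu; split => //; exists r.
  exfalso; apply: (nonneg_contra nz (u := - nu)).
  - by move=> r; rewrite mxE oppr_ge0; move: (H r); rewrite -leNgt.
  - by rewrite oppr_eq0.
  - by rewrite mulNmx nM oppr0.
case: (boolP [exists r, 0 < - nu 0 r]) => [/existsP [r hr]|/existsPn H].
  exists (- nu); split.
  - by rewrite mulNmx nM oppr0.
  - by under eq_bigr do rewrite mxE; rewrite sumrN oppr_le0 ltW.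
  - by exists r; rewrite mxE.
exfalso; apply: (nonneg_contra nz (u := nu)) => //.
by move=> r; move: (H r); rewrite -leNgt oppr_le0.
Qed.

Lemma margin_gen (k : nat) (h : 'cV[R]_k) (N : R) : 1 <= N -> h != 0 ->
  forall K (Mi : 'M[int]_(K, k)),
  map_mx intr Mi *m h = 0 ->
  (forall r, \sum_a ((Mi r a)%:~R : R) ^+ 2 + 1 <= N ^+ 2) ->
  (forall mu : 'rV[R]_K, (forall r, 0 <= mu 0 r) -> \sum_r mu 0 r = 1 ->
     mu *m map_mx intr Mi != 0) ->
  forall lam : 'rV[R]_K, (forall r, 0 <= lam 0 r) -> \sum_r lam 0 r = 1 ->
  1 <= k%:R * N ^+ k.-1 * Num.sqrt (\sum_a (lam *m map_mx intr Mi) 0 a ^+ 2).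
Proof.
move=> N1 h0; elim=> [|K IH] Mi Mh Mb nz lam l0 l1.
  by move: l1; rewrite big_ord0 => /eqP; rewrite eq_sym oner_eq0.
set M := map_mx intr Mi.
case: (boolP (row_free M)) => rf; first by apply: (final_case N1 h0 Mh rf Mb l1).
have [nu n0 nM] : exists2 nu : 'rV[R]_K.+1, nu != 0 & nu *m M = 0.
  have : [exists i, row i (kermx M) != 0].
    move: rf; rewrite -kermx_eq0; apply: contraNT => /existsPn H.
    by apply/eqP/row_matrixP => i; rewrite row0; exact/eqP/negPn/H.
  move=> /existsP [i hi]; exists (row i (kermx M)) => //.
  by rewrite -row_mul mulmx_ker row0.
have [w [wM ws [r1 w1]]] := find_w nz n0 nM.
have [r0 [t [t0 hmu hr0]]] := pivot l0 (ex_intro _ r1 w1).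
pose mu := lam - t *: w.
have muE : forall r, mu 0 r = lam 0 r - t * w 0 r by move=> r; rewrite !mxE.
have muM : mu *m M = lam *m M by rewrite mulmxBl -scalemxAl wM scaler0 subr0.
pose s := \sum_r mu 0 r.
have s1 : 1 <= s.
  rewrite /s (eq_bigr _ (fun r _ => muE r)) sumrB l1 -mulr_sumr lerDl oppr_ge0.
  by rewrite mulr_ge0_le0.
have s0 : 0 < s by apply: lt_le_trans s1.
pose Mi' := rowsub (lift r0) Mi.
have M'E : map_mx intr Mi' = rowsub (lift r0) M by apply/matrixP => i j; rewrite !mxE.
pose lam' : 'rV[R]_K := s^-1 *: \row_i mu 0 (lift r0 i).
have mu0 : mu 0 r0 = 0 by rewrite muE.
have key : lam' *m map_mx intr Mi' = s^-1 *: (lam *m M).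
  by rewrite M'E -scalemxAl -mul_lift // muM.
have IH' := IH Mi'.
have := IH' _ _ _ lam'.
rewrite key => H; apply: (le_trans (H _ _ _ _ _)).
- by rewrite M'E mul_rowsub_mx Mh; apply/matrixP => i j; rewrite !mxE.
- by move=> r; rewrite /Mi'; under eq_bigr do rewrite mxE; exact: Mb.
- move=> mu' m0 m1; set ext := \row_r oapp (fun i => mu' 0 i) 0 (unlift r0 r).
  have e0 : ext 0 r0 = 0 by rewrite mxE unlift_none.
  have eE : \row_i ext 0 (lift r0 i) = mu' by apply/rowP => i; rewrite !mxE liftK.
  have := nz ext.
  rewrite (mul_lift _ e0) eE -M'E (sum_lift e0).
  apply.
    by move=> r; rewrite mxE; case: unlift => //=.
  by rewrite -m1; apply: eq_bigr => i; rewrite mxE liftK.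
- by move=> r; rewrite !mxE mulr_ge0 // ?invr_ge0 ?ltW // hmu.
- under eq_bigr do rewrite !mxE.
  have sE : s = \sum_i (lam 0 (lift r0 i) - t * w 0 (lift r0 i)).
    by rewrite /s (sum_lift (u := fun r => mu 0 r) mu0); apply: eq_bigr => i _; rewrite muE.
  by rewrite -mulr_sumr -sE mulVf // gt_eqF.
- apply: ler_wpM2l; first by apply: mulr_ge0; [exact: ler0n | apply: exprn_ge0; apply: le_trans N1].
  rewrite ler_sqrt; last by apply: sumr_ge0 => a _; exact: sqr_ge0.
  apply: ler_sum => a _; rewrite mxE exprMn -[X in _ <= X]mul1r ler_wpM2r ?sqr_ge0 //.
  rewrite exprVn invf_le1 ?exprn_gt0 //.
  by rewrite -(expr1n _ 2) ler_pXn2r // ?nnegrE ?ler01 // ltW.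
Qed.

End Red.

Lemma invmx_diag (k : nat) (t : 'rV[CC]_k) : nz_vec t ->
  invmx (diag_mx t) = diag_mx (\row_a (t 0 a)^-1).
Proof.
move=> ht.
have e : diag_mx t *m diag_mx (\row_a (t 0 a)^-1) = 1%:M.
  rewrite mulmx_diag; apply/matrixP => i j; rewrite !mxE divff //.
have [u _] := mulmx1_unit e.
by rewrite -[RHS](mulKmx u) e mulmx1.
Qed.

Lemma lin_subst_diag (n : nat) (s : 'rV[CC]_n) :
  lin_subst (diag_mx s) = [tuple s 0 k *: 'X_k | k < n].
Proof.
apply: eq_from_tnth => k; rewrite !tnth_mktuple (bigD1 k) //= big1 ?addr0.
  by rewrite mxE eqxx mulr1n.
by move=> q /negPf hq; rewrite mxE eq_sym hq mulr0n scale0r.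
Qed.

Lemma coef_comp_diag (n : nat) (c : 'I_n -> CC) (f : {mpoly CC[n]}) (al : 'X_{1..n}) :
  (f \mPo [tuple c k *: 'X_k | k < n])@_al = f@_al * \prod_k c k ^+ al k.
Proof.
have hX : forall m : 'X_{1..n}, ('X_[m] \mPo [tuple c k *: 'X_k | k < n])@_al
     = (m == al)%:R * \prod_k c k ^+ m k.
  move=> m; rewrite comp_mpolyX.
  have -> : \prod_(i < n) tnth [tuple c k *: 'X_k | k < n] i ^+ m i
      = (\prod_k c k ^+ m k) *: 'X_[m].
    rewrite mpolyXE_id -scaler_prod; apply: eq_bigr => i _.
    by rewrite tnth_mktuple exprZn.
  by rewrite mcoeffZ mcoeffX mulrC.
rewrite comp_mpolyEX raddf_sum /=.
under eq_bigr do rewrite mcoeffZ hX.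
case: (boolP (al \in msupp f)) => hal.
  rewrite (bigD1_seq al) //= eqxx mulr1n mul1r [X in _ + X]big1 ?addr0 // => m /negPf ->.
  by rewrite mul0r mulr0.
rewrite big1_seq; last first.
  move=> m /andP [_ hm]; case: eqP => [em|_]; last by rewrite mul0r mulr0.
  by move: hal; rewrite -em hm.
by move: hal; rewrite -mcoeff_eq0 => /eqP ->; rewrite mul0r.
Qed.

Lemma act_sys_diag (m n : nat) (t : 'rV[CC]_m) (s : 'rV[CC]_n) (f : system m n) i :
  act_sys (diag_mx t) (diag_mx s) f i = t 0 i *: poly_compinv (diag_mx s) (f i).
Proof.
rewrite /act_sys /actX /actY (bigD1 i) //= [X in _ + X]big1 ?addr0.
  by rewrite mxE eqxx mulr1n.
by move=> q /negPf hq; rewrite mxE eq_sym hq mulr0n scale0r.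
Qed.

Lemma act_tens_diag (m n : nat) (t : 'rV[CC]_m) (s : 'rV[CC]_n) (u : tens m n) l j i :
  nz_vec t ->
  act_tens (diag_mx t) (diag_mx s) u l j i =
  (s 0 l * (t 0 j)^-1) *: act_sys (diag_mx t) (diag_mx s) (u l j) i.
Proof.
move=> ht; rewrite /act_tens invmx_diag // (bigD1 l) //= [X in _ + X]big1 ?addr0.
  rewrite (bigD1 j) //= [X in _ + X]big1 ?addr0.
    by rewrite !mxE !eqxx !mulr1n.
  by move=> q /negPf hq; rewrite [diag_mx _ q j]mxE hq mulr0n mulr0 scale0r.
move=> q /negPf hq; apply: big1 => j0 _.
by rewrite [diag_mx s l q]mxE eq_sym hq mulr0n mul0r scale0r.
Qed.

Lemma coef_act (m n : nat) (t : 'rV[CC]_m) (s : 'rV[CC]_n) (u : tens m n) l j i al :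
  nz_vec t -> nz_vec s ->
  (act_tens (diag_mx t) (diag_mx s) u l j i)@_al =
  s 0 l * (t 0 j)^-1 * t 0 i * (u l j i)@_al * \prod_b ((s 0 b)^-1) ^+ al b.
Proof.
move=> ht hs; rewrite act_tens_diag // act_sys_diag !mcoeffZ /poly_compinv.
rewrite invmx_diag // lin_subst_diag coef_comp_diag.
by under eq_bigr do rewrite mxE; rewrite !mulrA.
Qed.

Lemma two_neq0 : (2 : CC) != 0.
Proof. by rewrite pnatr_eq0. Qed.

Lemma two_exp_neq1 (n : nat) : (2 : CC) ^+ n.+1 != 1.
Proof. by rewrite -natrX pnatr_eq1 -(expn0 2) eqn_exp2l. Qed.

Lemma two_expz_inj (x y : int) : (2 : CC) ^ x = 2 ^ y -> x = y.
Proof.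
move=> e.
have e1 : (2 : CC) ^ (x - y) = 1.
  apply: (mulIf (expfz_neq0 y two_neq0)); rewrite -expfzDr ?two_neq0 //.
  by rewrite subrK mul1r.
apply/eqP; rewrite -subr_eq0; move: e1.
case: (x - y) => [[|n]|n] //=.
  by move=> /eqP; rewrite (negPf (two_exp_neq1 n)).
rewrite NegzE -invr_expz => /eqP; rewrite invr_eq1 (negPf (two_exp_neq1 n)) //.
Qed.

Definition e2 (k : nat) (a : 'I_k) : 'rV[CC]_k := \row_y (if y == a then 2 else 1).
Definition one (k : nat) : 'rV[CC]_k := const_mx 1.

Lemma nz_e2 k a : nz_vec (@e2 k a).
Proof. by move=> y; rewrite mxE; case: (y == a); rewrite ?two_neq0 ?oner_eq0. Qed.
Lemma nz_one k : nz_vec (one k).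
Proof. by move=> y; rewrite mxE oner_eq0. Qed.

Lemma lmono_e2 k a w : lmono (@e2 k a) w = 2 ^ (w a).
Proof.
rewrite /lmono (bigD1 a) //= big1 ?mulr1; first by rewrite mxE eqxx.
by move=> y /negPf hy; rewrite mxE hy exp1rz.
Qed.

Lemma lmono_one k w : lmono (one k) w = 1.
Proof. by rewrite /lmono big1 // => y _; rewrite mxE exp1rz. Qed.

Lemma if2 (b : bool) : (if b then (2:CC) else 1) = 2 ^ (Posz b).
Proof. by case: b. Qed.

Lemma evecE k (i a : 'I_k) : evec i a = Posz (i == a).
Proof. by rewrite /evec eq_sym; case: (i == a). Qed.

Lemma exists_coef (n : nat) (p : {mpoly CC[n]}) : p != 0 -> exists2 al, al \in msupp p & p@_al != 0.
Proof.
move=> p0; case e: (msupp p) => [|a r].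
  by move: p0; rewrite (mpolyE p) e big_nil eqxx.
by exists a; [rewrite mem_head | rewrite -mcoeff_msupp e mem_head].
Qed.

Lemma weight_char (m n : nat) (d : 'I_m -> nat) w' w'' :
  is_weight d w' w'' ->
  exists (i j : 'I_m) (l : 'I_n) (alpha : 'I_n -> nat),
       (\sum_(k < n) alpha k <= \max_(i < m) d i)%N /\
       w' = (fun a => evec i a - evec j a) /\
       w'' = (fun b => - (alpha b)%:Z + evec l b).
Proof.
move=> [u [hrep [[l [j [i hnz]]] heig]]].
have [al alS alc] := exists_coef hnz.
have E : forall t s, nz_vec t -> nz_vec s ->
    s 0 l * (t 0 j)^-1 * t 0 i * \prod_b ((s 0 b)^-1) ^+ al b = lmono t w' * lmono s w''.
  move=> t s ht hs.
  have := congr1 (fun X : tens m n => (X l j i)@_al) (heig t s ht hs) => /=.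
  rewrite coef_act // /tens_scale mcoeffZ => e.
  apply: (mulIf alc); rewrite -e; rewrite -!mulrA; congr (_ * (_ * (_ * _))).
  by rewrite mulrC.
exists i, j, l, al; split; [|split].
- have := msize_mdeg_lt alS; have := hrep l j i; rewrite /poly_le => h1 h2.
  rewrite -mdegE; apply: leq_trans (_ : (d i <= _)%N).
    by rewrite -ltnS; apply: leq_trans h2 h1.
  exact: leq_bigmax.
- apply: FunctionalExtensionality.functional_extensionality => a.
  have := E (e2 a) (one n) (nz_e2 a) (@nz_one n).
  rewrite lmono_e2 lmono_one mulr1 !mxE mul1r big1; last by move=> b _; rewrite mxE invr1 expr1n.
  rewrite mulr1 !if2 !evecE invr_expz -expfzDr ?two_neq0 // => /two_expz_inj <-.
  by rewrite addrC.
- apply: FunctionalExtensionality.functional_extensionality => b.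
  have := E (one m) (e2 b) (@nz_one m) (nz_e2 b).
  rewrite lmono_e2 lmono_one mul1r !mxE invr1 mulr1 (bigD1 b) //= big1; last first.
    by move=> b' /negPf hb; rewrite mxE hb invr1 expr1n.
  rewrite mulr1 mxE eqxx if2 evecE.
  have -> : (2 : CC)^-1 ^+ al b = 2 ^ (- (al b)%:Z) by rewrite -exprz_inv.
  rewrite mulr1 -expfzDr ?two_neq0 // => /two_expz_inj <-.
  by rewrite addrC.
Qed.

Lemma sum_evec k (i : 'I_k) : \sum_a evec i a = 1.
Proof.
rewrite (bigD1 i) //= big1 ?addr0; first by rewrite evecE eqxx.
by move=> a /negPf h; rewrite evecE eq_sym h.
Qed.

Lemma wsq_int (m n : nat) (i j : 'I_m) (l : 'I_n) (al : 'I_n -> nat) (D : nat) :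
  (\sum_(k < n) al k <= D)%N ->
  \sum_a (evec i a - evec j a) ^+ 2 + \sum_b (- (al b)%:Z + evec l b) ^+ 2
    <= (D%:Z) ^+ 2 + 3.
Proof.
move=> hD.
have h1 : \sum_a (evec i a - evec j a) ^+ 2 <= 2.
  apply: (@le_trans _ _ (\sum_a (evec i a + evec j a))).
    apply: ler_sum => a _; rewrite !evecE.
    by case: (i == a); case: (j == a).
  by rewrite big_split /= !sum_evec.
pose S := \sum_(k < n) al k.
have hS : forall b, (al b <= S)%N.
  by move=> b; rewrite /S (bigD1 b) //= leq_addr.
have h2 : \sum_b (- (al b)%:Z + evec l b) ^+ 2 <= \sum_b ((al b * S)%:Z + evec l b).
  apply: ler_sum => b _; rewrite evecE.
  have := hS b; case: (l == b) => /= hb; nia.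
rewrite big_split /= sum_evec in h2.
have h3 : \sum_b (al b * S)%:Z = (S * S)%:Z.
  by under eq_bigr do rewrite -natz; rewrite -natr_sum natz /S big_distrl.
rewrite h3 in h2.
have h4 : (S * S <= D * D)%N by apply: leq_mul.
rewrite [D%:Z ^+ 2]expr2; apply: le_trans (lerD h1 h2) _; lia.
Qed.

Lemma wsq_R (m n : nat) (i j : 'I_m) (l : 'I_n) (al : 'I_n -> nat) (D : nat) :
  (\sum_(k < n) al k <= D)%N ->
  \sum_a ((evec i a - evec j a)%:~R : RR) ^+ 2
    + \sum_b ((- (al b)%:Z + evec l b)%:~R : RR) ^+ 2 <= (D%:R) ^+ 2 + 3.
Proof.
move=> hD; have := wsq_int i j l hD.
rewrite -(ler_int RR) rmorphD /= !rmorph_sum /=.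
under eq_bigr do rewrite rmorphXn.
under [X in _ + X <= _]eq_bigr do rewrite rmorphXn.
by rewrite rmorphD rmorphXn /=.
Qed.

Unset Implicit Arguments.
Set Strict Implicit.

Theorem mainTheorem15 (m n : nat) (d : 'I_m -> nat)
    (G : 'M[CC]_m -> 'M[CC]_n -> Prop) :
  symmetric_subgroup G -> contains_torus G ->
  let D := \max_(i < m) d i in
  (forall w' w'', @is_weight m n d w' w'' ->
     exists (i j : 'I_m) (l : 'I_n) (alpha : 'I_n -> nat),
       (\sum_(k < n) alpha k <= D)%N /\
       w' = (fun a => evec i a - evec j a) /\
       w'' = (fun b => - (alpha b)%:Z + evec l b)) /\
  weight_norm_le (@is_weight m n d) (D + 2)%:R /\
  weight_margin_ge (@is_weight m n d)
    (((D + 2)%:R : RR) ^ (1 - (m + n)%:Z) / (m + n)%:R).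
Proof.
move=> _ _ D.
have DD : forall x : RR, 0 <= x -> x ^+ 2 + 3 + 1 <= (x + 2) ^+ 2 by move=> x x0; nra.
have D0 : 0 <= (D%:R : RR) by exact: ler0n.
split; first by move=> w' w'' hw; exact: weight_char hw.
split.
  move=> w' w'' /weight_char [i [j [l [al [hal [-> ->]]]]]].
  rewrite /wnorm /=.
  apply: le_trans (_ : Num.sqrt (((D + 2)%:R : RR) ^+ 2) <= _); last first.
    by rewrite sqrtr_sqr ger0_norm // ler0n.
  rewrite ler_sqrt ?exprn_ge0 ?ler0n //.
  apply: le_trans (wsq_R i j l hal) _.
  have := DD _ D0; rewrite natrD; lra.
move=> S hS h0 p' p'' [K [v' [v'' [lam [hv [l0 [l1 [hp' hp'']]]]]]]].
case: K v' v'' lam hv l0 l1 hp' hp'' => [|K] v' v'' lam hv l0 l1 hp' hp''.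
  by move: l1; rewrite big_ord0 => /eqP; rewrite eq_sym oner_eq0.
have [i0 [j0 [l00 [al0 _]]]] := weight_char (hS _ _ (hv ord0)).
have hw : forall r, exists (i j : 'I_m) (l : 'I_n) (al : 'I_n -> nat),
    (\sum_(k < n) al k <= D)%N /\ v' r = (fun a => evec i a - evec j a) /\
    v'' r = (fun b => - (al b)%:Z + evec l b).
  by move=> r; exact: weight_char (hS _ _ (hv r)).
pose N : RR := (D + 2)%:R.
have N1 : 1 <= N by rewrite /N ler1n addn2.
pose Mi : 'M[int]_(K.+1, m + n) := \matrix_(r, a) row_mx (\row_x v' r x) (\row_y v'' r y) 0 a.
pose M : 'M[RR]_(K.+1, m + n) := map_mx intr Mi.
have MLi : forall r x, Mi r (lshift n x) = v' r x by move=> r x; rewrite mxE row_mxEl mxE.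
have MRi : forall r y, Mi r (rshift m y) = v'' r y by move=> r y; rewrite mxE row_mxEr mxE.
have ML : forall r x, M r (lshift n x) = (v' r x)%:~R by move=> r x; rewrite mxE MLi.
have MR : forall r y, M r (rshift m y) = (v'' r y)%:~R by move=> r y; rewrite mxE MRi.
pose h : 'cV[RR]_(m + n) := col_mx (const_mx 1) 0.
have h0' : h != 0.
  apply/negP => /eqP /matrixP /(_ (lshift n i0) 0); rewrite /h col_mxEu !mxE => /eqP; rewrite oner_eq0 //.
have Mh : M *m h = 0.
  apply/matrixP => r c; rewrite !mxE big_split_ord /=.
  have -> : \sum_(i < n) M r (rshift m i) * h (rshift m i) c = 0.
    by apply: big1 => y _; rewrite /h col_mxEd [X in _ * X]mxE mulr0.
  rewrite addr0 (eq_bigr (fun x => (v' r x)%:~R)); last first.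
    by move=> x _; rewrite ML /h col_mxEu mxE mulr1.
  have [i [j [l [al [_ [e _]]]]]] := hw r.
  rewrite -rmorph_sum /= e sumrB !sum_evec subrr.
  exact: rmorph0.
have Mb : forall r, \sum_a ((Mi r a)%:~R : RR) ^+ 2 + 1 <= N ^+ 2.
  move=> r; have [i [j [l [al [hal [e1 e2]]]]]] := hw r.
  rewrite big_split_ord /=.
  rewrite (eq_bigr (fun x => ((v' r x)%:~R : RR) ^+ 2)); last by move=> x _; rewrite MLi.
  have e3 : \sum_(i1 < n) ((Mi r (rshift m i1))%:~R : RR) ^+ 2 = \sum_y ((v'' r y)%:~R : RR) ^+ 2.
    by apply: eq_bigr => y _; rewrite MRi.
  rewrite e3.
  rewrite e1 e2; apply: le_trans (lerD (wsq_R i j l hal) (lexx 1)) _.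
  by rewrite /N natrD; apply: DD.
pose lamr : 'rV[RR]_K.+1 := \row_r lam r.
have nz : forall mu : 'rV[RR]_K.+1, (forall r, 0 <= mu 0 r) -> \sum_r mu 0 r = 1 -> mu *m M != 0.
  move=> mu m0 m1; apply/negP => /eqP hm; apply: h0.
  exists K.+1, v', v'', (fun r => mu 0 r); split => //; split => //; split => //; split.
    move=> x; have := congr1 (fun X : 'rV[RR]_(m + n) => X 0 (lshift n x)) hm => /=.
    rewrite !mxE => e; transitivity (\sum_j mu 0 j * M j (lshift n x)); first by rewrite e.
    by apply: eq_bigr => r _; rewrite ML.
  move=> y; have := congr1 (fun X : 'rV[RR]_(m + n) => X 0 (rshift m y)) hm => /=.
  rewrite !mxE => e; transitivity (\sum_j mu 0 j * M j (rshift m y)); first by rewrite e.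
  by apply: eq_bigr => r _; rewrite MR.
have l0' : forall r, 0 <= lamr 0 r by move=> r; rewrite mxE.
have l1' : \sum_r lamr 0 r = 1 by rewrite -l1; apply: eq_bigr => r _; rewrite mxE.
have := margin_gen N1 h0' Mh Mb nz l0' l1'.
have -> : Num.sqrt (\sum_a (lamr *m map_mx intr Mi) 0 a ^+ 2) = wnorm p' p''.
  rewrite /wnorm big_split_ord; congr (Num.sqrt (_ + _)); apply: eq_bigr => x _.
    by rewrite hp' mxE; congr (_ ^+ 2); apply: eq_bigr => r _; rewrite mxE -ML.
  by rewrite hp'' mxE; congr (_ ^+ 2); apply: eq_bigr => r _; rewrite mxE -MR.
set W := wnorm p' p''.
have mn1 : (0 < m + n)%N by case: (m) i0 => [[]|] //.
have Np : 0 < N ^+ (m + n).-1 by apply: exprn_gt0; apply: lt_le_trans N1.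
have -> : N ^ (1 - (m + n)%:Z) = (N ^+ (m + n).-1)^-1.
  rewrite exprnN; congr (_ ^ _); lia.
move=> H.
rewrite -invfM -[_^-1]mulr1 ler_pdivrMl; last by rewrite mulr_gt0 // ltr0n.
by rewrite [N ^+ _ * _]mulrC.
Qed.
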